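(* Let $\mathcal{A}$ be an additive category, let $\mathcal{D}$ be a left weakly exact structure on $\mathcal{A}$ and let $I$ be a right weakly exact structure on $\mathcal{A}$. Then the class $\mathcal{W}$ of all kernel-cokernel pairs $A\xrightarrow{i}B\xrightarrow{d}C$ in $\mathcal{A}$ with $i\in I$ and $d\in\mathcal{D}$ is a weakly exact structure on $\mathcal{A}$.
   Context: Let $\mathcal{A}$ be an additive category. A kernel-cokernel pair (short exact sequence) is a pair of composable morphisms $A\xrightarrow{i}B\xrightarrow{d}C$ with $i$ a kernel of $d$ and $d$ a cokernel of $i$. A weakly exact structure on $\mathcal{A}$ is a class $\mathcal{W}$ of kernel-cokernel pairs, closed under isomorphisms of sequences and under finite direct sums of sequences, such that, calling $i$ an admissible monic (resp. $d$ an admissible epic) if $(i,d)\in\mathcal{W}$ for some $d$ (resp. some $i$): (E0) $1_A$ is an admissible monic for every object $A$; (E0)$^{op}$ $1_A$ is an admissible epic for every object $A$; (E2) for every admissible monic $i:A\to B$ and every morphism $t:A\to C$ the pushout of $i$ along $t$ exists and the resulting morphism $C\to S$ is an admissible monic; (E2)$^{op}$ for every admissible epic $h:A\to C$ and every morphism $t:B\to C$ the pullback of $h$ along $t$ exists and the resulting morphism $P\to B$ is an admissible epic. A right weakly exact structure on $\mathcal{A}$ is a class $I$ of morphisms that are kernels (of some morphism), closed under isomorphisms (of arrows), such that: (Id) for every object $X$, $1_X\in I$ and $0\to X$ is in $I$; (P) for every $f:X\to Y$ in $I$ and every morphism $h:X\to X'$ the pushout of $f$ along $h$ exists and the resulting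 morphism $f':X'\to Y'$ lies in $I$; (Q) if $A\xrightarrow{a}B\xrightarrow{b}C$ with $ba\in I$ and $a$ has a cokernel, then $a\in I$; (S) $I$ is closed under direct sums of morphisms. A left weakly exact structure is a class $\mathcal{D}$ of morphisms that are cokernels, closed under isomorphisms, satisfying the dual conditions: (Id$^{op}$) $1_X\in\mathcal{D}$ and $X\to 0$ is in $\mathcal{D}$ for all $X$; (P$^{op}$) pullbacks of morphisms in $\mathcal{D}$ along arbitrary morphisms exist and yield morphisms in $\mathcal{D}$; (Q$^{op}$) if $ba\in\mathcal{D}$ and $b$ has a kernel then $b\in\mathcal{D}$; (S$^{op}$) $\mathcal{D}$ is closed under direct sums of morphisms. *)

(* Defs.v *)
Set Implicit Arguments.
Unset Strict Implicit.

Record AddCat := {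
  Obj :> Type;
  Hom : Obj -> Obj -> Type;
  idm : forall X, Hom X X;
  comp : forall X Y Z, Hom Y Z -> Hom X Y -> Hom X Z;
  comp_assoc : forall X Y Z W (h : Hom Z W) (g : Hom Y Z) (f : Hom X Y),
      comp h (comp g f) = comp (comp h g) f;
  comp_id_l : forall X Y (f : Hom X Y), comp (idm Y) f = f;
  comp_id_r : forall X Y (f : Hom X Y), comp f (idm X) = f;
  zero : forall X Y, Hom X Y;
  add : forall X Y, Hom X Y -> Hom X Y -> Hom X Y;
  neg : forall X Y, Hom X Y -> Hom X Y;
  add_assoc : forall X Y (f g h : Hom X Y), add f (add g h) = add (add f g) h;
  add_comm : forall X Y (f g : Hom X Y), add f g = add g f;
  add_zero : forall X Y (f : Hom X Y), add f (zero X Y) = f;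
  add_neg : forall X Y (f : Hom X Y), add f (neg f) = zero X Y;
  comp_add_l : forall X Y Z (g g' : Hom Y Z) (f : Hom X Y),
      comp (add g g') f = add (comp g f) (comp g' f);
  comp_add_r : forall X Y Z (g : Hom Y Z) (f f' : Hom X Y),
      comp g (add f f') = add (comp g f) (comp g f');
  zobj : Obj;
  zobj_id : idm zobj = zero zobj zobj;
  bprod : Obj -> Obj -> Obj;
  bin1 : forall X Y, Hom X (bprod X Y);
  bin2 : forall X Y, Hom Y (bprod X Y);
  bpr1 : forall X Y, Hom (bprod X Y) X;
  bpr2 : forall X Y, Hom (bprod X Y) Y;
  bp11 : forall X Y, comp (bpr1 X Y) (bin1 X Y) = idm X;
  bp22 : forall X Y, comp (bpr2 X Y) (bin2 X Y) = idm Y;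
  bp12 : forall X Y, comp (bpr1 X Y) (bin2 X Y) = zero Y X;
  bp21 : forall X Y, comp (bpr2 X Y) (bin1 X Y) = zero X Y;
  bpsum : forall X Y, add (comp (bin1 X Y) (bpr1 X Y)) (comp (bin2 X Y) (bpr2 X Y))
                      = idm (bprod X Y)
}.

Arguments Hom : clear implicits.
Arguments idm {_} X.
Arguments comp {_ X Y Z} g f.
Arguments zero {_} X Y.
Arguments add {_ X Y} f g.
Arguments zobj {_}.
Arguments bprod {_} X Y.
Arguments bin1 {_} X Y.
Arguments bin2 {_} X Y.
Arguments bpr1 {_} X Y.
Arguments bpr2 {_} X Y.

Section Defs.
Context {C : AddCat}.

Definition is_iso {X Y : C} (f : Hom C X Y) : Prop :=
  exists g : Hom C Y X, comp g f = idm X /\ comp f g = idm Y.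

Definition is_kernel {A B D : C} (i : Hom C A B) (d : Hom C B D) : Prop :=
  comp d i = zero A D /\
  forall (W : C) (g : Hom C W B), comp d g = zero W D ->
    exists h : Hom C W A, comp i h = g /\
      forall h' : Hom C W A, comp i h' = g -> h' = h.

Definition is_cokernel {A B D : C} (d : Hom C B D) (i : Hom C A B) : Prop :=
  comp d i = zero A D /\
  forall (W : C) (g : Hom C B W), comp g i = zero A W ->
    exists h : Hom C D W, comp h d = g /\
      forall h' : Hom C D W, comp h' d = g -> h' = h.

Definition is_a_kernel {A B : C} (i : Hom C A B) : Prop :=
  exists (D : C) (d : Hom C B D), is_kernel i d.
Definition is_a_cokernel {B D : C} (d : Hom C B D) : Prop :=
  exists (A : C) (i : Hom C A B), is_cokernel d i.
Definition has_cokernel {A B : C} (a : Hom C A B) : Prop :=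
  exists (D : C) (q : Hom C B D), is_cokernel q a.
Definition has_kernel {B D : C} (b : Hom C B D) : Prop :=
  exists (A : C) (k : Hom C A B), is_kernel k b.

Definition kc_pair {A B D : C} (i : Hom C A B) (d : Hom C B D) : Prop :=
  is_kernel i d /\ is_cokernel d i.

Definition is_pushout {X Y X' P : C} (f : Hom C X Y) (h : Hom C X X')
    (f' : Hom C X' P) (h' : Hom C Y P) : Prop :=
  comp f' h = comp h' f /\
  forall (W : C) (u : Hom C X' W) (v : Hom C Y W), comp u h = comp v f ->
    exists w : Hom C P W, (comp w f' = u /\ comp w h' = v) /\
      forall w' : Hom C P W, comp w' f' = u /\ comp w' h' = v -> w' = w.

Definition is_pullback {Y Z Y' P : C} (g : Hom C Y Z) (t : Hom C Y' Z)
    (g' : Hom C P Y') (t' : Hom C P Y) : Prop :=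
  comp t g' = comp g t' /\
  forall (W : C) (u : Hom C W Y') (v : Hom C W Y), comp t u = comp g v ->
    exists w : Hom C W P, (comp g' w = u /\ comp t' w = v) /\
      forall w' : Hom C W P, comp g' w' = u /\ comp t' w' = v -> w' = w.

Definition dsum {X1 Y1 X2 Y2 : C} (f1 : Hom C X1 Y1) (f2 : Hom C X2 Y2)
  : Hom C (bprod X1 X2) (bprod Y1 Y2) :=
  add (comp (bin1 Y1 Y2) (comp f1 (bpr1 X1 X2)))
      (comp (bin2 Y1 Y2) (comp f2 (bpr2 X1 X2))).

Definition MorClass := forall X Y : C, Hom C X Y -> Prop.
Definition SeqClass := forall A B D : C, Hom C A B -> Hom C B D -> Prop.

Definition iso_arrows {X Y X' Y' : C} (f : Hom C X Y) (f' : Hom C X' Y') : Prop :=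
  exists (a : Hom C X X') (b : Hom C Y Y'),
    is_iso a /\ is_iso b /\ comp f' a = comp b f.

Definition iso_seqs {A B D A' B' D' : C} (i : Hom C A B) (d : Hom C B D)
    (i' : Hom C A' B') (d' : Hom C B' D') : Prop :=
  exists (a : Hom C A A') (b : Hom C B B') (c : Hom C D D'),
    is_iso a /\ is_iso b /\ is_iso c /\
    comp i' a = comp b i /\ comp d' b = comp c d.

Definition right_weakly_exact (I : MorClass) : Prop :=
  (forall X Y (f : Hom C X Y), I X Y f -> is_a_kernel f) /\
  (forall X Y X' Y' (f : Hom C X Y) (f' : Hom C X' Y'),
      I X Y f -> iso_arrows f f' -> I X' Y' f') /\
  (* (Id) *)
  (forall X : C, I X X (idm X)) /\
  (forall X : C, I zobj X (zero zobj X)) /\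
  (* (P) *)
  (forall X Y X' (f : Hom C X Y) (h : Hom C X X'), I X Y f ->
     exists (P : C) (f' : Hom C X' P) (h' : Hom C Y P),
       is_pushout f h f' h' /\ I X' P f') /\
  (* (Q) *)
  (forall A B D (a : Hom C A B) (b : Hom C B D),
      I A D (comp b a) -> has_cokernel a -> I A B a) /\
  (* (S) *)
  (forall X1 Y1 X2 Y2 (f1 : Hom C X1 Y1) (f2 : Hom C X2 Y2),
      I X1 Y1 f1 -> I X2 Y2 f2 -> I _ _ (dsum f1 f2)).

Definition left_weakly_exact (D : MorClass) : Prop :=
  (forall X Y (f : Hom C X Y), D X Y f -> is_a_cokernel f) /\
  (forall X Y X' Y' (f : Hom C X Y) (f' : Hom C X' Y'),
      D X Y f -> iso_arrows f f' -> D X' Y' f') /\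
  (* (Id^op) *)
  (forall X : C, D X X (idm X)) /\
  (forall X : C, D X zobj (zero X zobj)) /\
  (* (P^op) *)
  (forall Y Z Y' (g : Hom C Y Z) (t : Hom C Y' Z), D Y Z g ->
     exists (P : C) (g' : Hom C P Y') (t' : Hom C P Y),
       is_pullback g t g' t' /\ D P Y' g') /\
  (* (Q^op) *)
  (forall A B E (a : Hom C A B) (b : Hom C B E),
      D A E (comp b a) -> has_kernel b -> D B E b) /\
  (* (S^op) *)
  (forall X1 Y1 X2 Y2 (f1 : Hom C X1 Y1) (f2 : Hom C X2 Y2),
      D X1 Y1 f1 -> D X2 Y2 f2 -> D _ _ (dsum f1 f2)).

Definition adm_monic (W : SeqClass) {A B : C} (i : Hom C A B) : Prop :=
  exists (D : C) (d : Hom C B D), W A B D i d.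
Definition adm_epic (W : SeqClass) {B D : C} (d : Hom C B D) : Prop :=
  exists (A : C) (i : Hom C A B), W A B D i d.

Definition weakly_exact (W : SeqClass) : Prop :=
  (forall A B D (i : Hom C A B) (d : Hom C B D), W A B D i d -> kc_pair i d) /\
  (forall A B D A' B' D' (i : Hom C A B) (d : Hom C B D)
          (i' : Hom C A' B') (d' : Hom C B' D'),
      W A B D i d -> iso_seqs i d i' d' -> W A' B' D' i' d') /\
  (* closed under finite direct sums: empty sum and binary sums *)
  W zobj zobj zobj (zero zobj zobj) (zero zobj zobj) /\
  (forall A1 B1 D1 A2 B2 D2 (i1 : Hom C A1 B1) (d1 : Hom C B1 D1)
          (i2 : Hom C A2 B2) (d2 : Hom C B2 D2),
      W A1 B1 D1 i1 d1 -> W A2 B2 D2 i2 d2 ->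
      W _ _ _ (dsum i1 i2) (dsum d1 d2)) /\
  (* (E0) and (E0^op) *)
  (forall A : C, adm_monic W (idm A)) /\
  (forall A : C, adm_epic W (idm A)) /\
  (* (E2) *)
  (forall A B X (i : Hom C A B) (t : Hom C A X), adm_monic W i ->
     exists (S : C) (i' : Hom C X S) (t' : Hom C B S),
       is_pushout i t i' t' /\ adm_monic W i') /\
  (* (E2^op) *)
  (forall A X B (h : Hom C A X) (t : Hom C B X), adm_epic W h ->
     exists (P : C) (h' : Hom C P B) (t' : Hom C P A),
       is_pullback h t h' t' /\ adm_epic W h').

End Defs.

(* Main.v *)
Require Import Defs.

Definition opCat (C : AddCat) : AddCat.
refine {| Obj := Obj C; Hom := fun X Y => Hom C Y X; idm := fun X => idm X;
  comp := fun X Y Z g f => comp f g; zero := fun X Y => zero Y X;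
  add := fun X Y f g => add f g; neg := fun X Y f => @neg C Y X f; zobj := zobj;
  bprod := fun X Y => bprod X Y; bin1 := fun X Y => bpr1 X Y; bin2 := fun X Y => bpr2 X Y;
  bpr1 := fun X Y => bin1 X Y; bpr2 := fun X Y => bin2 X Y |}.
- intros; symmetry; apply comp_assoc.
- intros; apply comp_id_r.
- intros; apply comp_id_l.
- intros; apply add_assoc.
- intros; apply add_comm.
- intros; apply add_zero.
- intros; apply add_neg.
- intros; apply comp_add_r.
- intros; apply comp_add_l.
- apply zobj_id.
- intros; apply bp11.
- intros; apply bp22.
- intros; apply bp21.
- intros; apply bp12.
- intros; apply bpsum.
Defined.


Lemma add_zero_l {C : AddCat} {X Y} (f : Hom C X Y) : add (zero X Y) f = f.
Proof. rewrite add_comm; apply add_zero. Qed.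

Lemma double_zero {C : AddCat} {X Y} (x : Hom C X Y) : add x x = x -> x = zero X Y.
Proof.
  intros H. assert (H0 : add (add x x) (@neg C X Y x) = add x (@neg C X Y x)) by (rewrite H; reflexivity).
  rewrite <- add_assoc, add_neg, add_zero in H0. exact H0.
Qed.

Lemma comp_zero_l {C : AddCat} {X Y Z} (f : Hom C X Y) : comp (zero Y Z) f = zero X Z.
Proof. apply double_zero. rewrite <- comp_add_l, add_zero. reflexivity. Qed.

Lemma comp_zero_r {C : AddCat} {X Y Z} (g : Hom C Y Z) : comp g (zero X Y) = zero X Z.
Proof. exact (@comp_zero_l (opCat C) Z Y X g). Qed.

Lemma from_zobj {C : AddCat} {X} (f : Hom C zobj X) : f = zero zobj X.
Proof. rewrite <- (comp_id_r f), zobj_id. apply comp_zero_r. Qed.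

Lemma to_zobj {C : AddCat} {X} (f : Hom C X zobj) : f = zero X zobj.
Proof. exact (@from_zobj (opCat C) X f). Qed.

Lemma K1 {C : AddCat} (A : C) : is_kernel (idm A) (zero A zobj).
Proof.
  split. apply comp_id_r.
  intros W g _. exists g. split. apply comp_id_l.
  intros h' H. rewrite comp_id_l in H. exact H.
Qed.

Lemma C1 {C : AddCat} (A : C) : is_cokernel (zero A zobj) (idm A).
Proof.
  split. apply comp_id_r.
  intros W g H. rewrite comp_id_r in H. subst g. exists (zero zobj W). split.
  apply comp_zero_l. intros h' _. apply from_zobj.
Qed.

Lemma K1op {C : AddCat} (A : C) : is_cokernel (idm A) (zero zobj A).
Proof. exact (@K1 (opCat C) A). Qed.
Lemma C1op {C : AddCat} (A : C) : is_kernel (zero zobj A) (idm A).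
Proof. exact (@C1 (opCat C) A). Qed.

Lemma ker_monic {C : AddCat} {A B E W : C} (i : Hom C A B) (d : Hom C B E)
  (h1 h2 : Hom C W A) : is_kernel i d -> comp i h1 = comp i h2 -> h1 = h2.
Proof.
  intros [H0 H] E1.
  assert (Z : comp d (comp i h2) = zero W E) by (rewrite comp_assoc, H0; apply comp_zero_l).
  destruct (H W _ Z) as [h [_ U]].
  rewrite (U h1 E1), (U h2 eq_refl). reflexivity.
Qed.

Lemma ker_iso {C : AddCat} {A B E A' B' E' : C} (i : Hom C A B) (d : Hom C B E)
  (i' : Hom C A' B') (d' : Hom C B' E') (a : Hom C A A') (a' : Hom C A' A)
  (b : Hom C B B') (b' : Hom C B' B) (c : Hom C E E') (c' : Hom C E' E) :
  comp a a' = idm A' -> comp b b' = idm B' -> comp b' b = idm B -> comp c' c = idm E ->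
  comp i' a = comp b i -> comp d' b = comp c d -> is_kernel i d -> is_kernel i' d'.
Proof.
  intros aa' bb' b'b c'c ei ed [H0 H]. split.
  - rewrite <- (comp_id_r i'), <- aa', (comp_assoc i' a a'), ei, <- (comp_assoc b i a'),
      (comp_assoc d' b), ed, <- (comp_assoc c d), (comp_assoc d i a'), H0, comp_zero_l, comp_zero_r.
    reflexivity.
  - intros W g Hg.
    assert (Z : comp d (comp b' g) = zero W E).
    { rewrite <- (comp_id_l d), <- c'c, <- (comp_assoc c' c d), <- ed.
      rewrite <- !comp_assoc. rewrite (comp_assoc b b' g), bb', comp_id_l, Hg.
      apply comp_zero_r. }
    destruct (H W _ Z) as [h [Eh U]].
    exists (comp a h). split.
    + rewrite comp_assoc, ei, <- comp_assoc, Eh, comp_assoc, bb'. apply comp_id_l.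
    + intros k Ek.
      assert (E2 : comp i (comp a' k) = comp b' g).
      { rewrite <- Ek, <- (comp_id_l i), <- b'b, <- (comp_assoc b' b i), <- ei.
        rewrite <- !comp_assoc, (comp_assoc a a' k), aa', comp_id_l. reflexivity. }
      rewrite <- (U _ E2), comp_assoc, aa'. symmetry; apply comp_id_l.
Qed.

Lemma coker_iso {C : AddCat} {A B E A' B' E' : C} (i : Hom C A B) (d : Hom C B E)
  (i' : Hom C A' B') (d' : Hom C B' E') (a : Hom C A A') (a' : Hom C A' A)
  (b : Hom C B B') (b' : Hom C B' B) (c : Hom C E E') (c' : Hom C E' E) :
  comp a a' = idm A' -> comp a' a = idm A -> comp b b' = idm B' -> comp b' b = idm B ->
  comp c c' = idm E' -> comp c' c = idm E ->
  comp i' a = comp b i -> comp d' b = comp c d -> is_cokernel d i -> is_cokernel d' i'.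
Proof.
  intros aa' a'a bb' b'b cc' c'c ei ed H.
  refine (@ker_iso (opCat C) E B A E' B' A' d i d' i' c' c b' b a' a cc' bb' b'b a'a _ _ H).
  - simpl. rewrite <- (comp_id_r (comp c' d')), <- bb', (comp_assoc _ b b'),
      <- (comp_assoc c' d' b), ed, (comp_assoc c' c d), c'c, comp_id_l. reflexivity.
  - simpl. rewrite <- (comp_id_r (comp b' i')), <- aa', (comp_assoc _ a a'),
      <- (comp_assoc b' i' a), ei, (comp_assoc b' b i), b'b, comp_id_l. reflexivity.
Qed.

Lemma kc_iso {C : AddCat} {A B E A' B' E' : C} (i : Hom C A B) (d : Hom C B E)
  (i' : Hom C A' B') (d' : Hom C B' E') :
  kc_pair i d -> iso_seqs i d i' d' -> kc_pair i' d'.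
Proof.
  intros [K Co] (a & b & c & [a' [a'a aa']] & [b' [b'b bb']] & [c' [c'c cc']] & ei & ed).
  split.
  - exact (ker_iso i d i' d' a a' b b' c c' aa' bb' b'b c'c ei ed K).
  - exact (coker_iso i d i' d' a a' b b' c c' aa' a'a bb' b'b cc' c'c ei ed Co).
Qed.

Lemma pr1_dsum {C : AddCat} {X1 Y1 X2 Y2 : C} (f1 : Hom C X1 Y1) (f2 : Hom C X2 Y2) :
  comp (bpr1 Y1 Y2) (dsum f1 f2) = comp f1 (bpr1 X1 X2).
Proof.
  unfold dsum. rewrite comp_add_r, (comp_assoc (bpr1 _ _) (bin1 _ _)), bp11, comp_id_l,
    (comp_assoc (bpr1 _ _) (bin2 _ _)), bp12, comp_zero_l, add_zero. reflexivity.
Qed.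

Lemma pr2_dsum {C : AddCat} {X1 Y1 X2 Y2 : C} (f1 : Hom C X1 Y1) (f2 : Hom C X2 Y2) :
  comp (bpr2 Y1 Y2) (dsum f1 f2) = comp f2 (bpr2 X1 X2).
Proof.
  unfold dsum. rewrite comp_add_r, (comp_assoc (bpr2 _ _) (bin1 _ _)), bp21, comp_zero_l,
    (comp_assoc (bpr2 _ _) (bin2 _ _)), bp22, comp_id_l, add_zero_l. reflexivity.
Qed.

Lemma joint_monic {C : AddCat} {W X Y : C} (x y : Hom C W (bprod X Y)) :
  comp (bpr1 X Y) x = comp (bpr1 X Y) y -> comp (bpr2 X Y) x = comp (bpr2 X Y) y -> x = y.
Proof.
  intros H1 H2. rewrite <- (comp_id_l x), <- (comp_id_l y), <- bpsum, !comp_add_l,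
    <- !comp_assoc, H1, H2. reflexivity.
Qed.

Definition pairm {C : AddCat} {W X Y : C} (h1 : Hom C W X) (h2 : Hom C W Y) : Hom C W (bprod X Y) :=
  add (comp (bin1 X Y) h1) (comp (bin2 X Y) h2).

Lemma pr1_pair {C : AddCat} {W X Y : C} (h1 : Hom C W X) (h2 : Hom C W Y) :
  comp (bpr1 X Y) (pairm h1 h2) = h1.
Proof.
  unfold pairm. rewrite comp_add_r, !comp_assoc, bp11, bp12, comp_id_l, comp_zero_l, add_zero.
  reflexivity.
Qed.

Lemma pr2_pair {C : AddCat} {W X Y : C} (h1 : Hom C W X) (h2 : Hom C W Y) :
  comp (bpr2 X Y) (pairm h1 h2) = h2.
Proof.
  unfold pairm. rewrite comp_add_r, !comp_assoc, bp21, bp22, comp_id_l, comp_zero_l, add_zero_l.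
  reflexivity.
Qed.

Lemma dsum_ker {C : AddCat} {A1 B1 E1 A2 B2 E2 : C} (i1 : Hom C A1 B1) (d1 : Hom C B1 E1)
  (i2 : Hom C A2 B2) (d2 : Hom C B2 E2) :
  is_kernel i1 d1 -> is_kernel i2 d2 -> is_kernel (dsum i1 i2) (dsum d1 d2).
Proof.
  intros [Z1 H1] [Z2 H2]. split.
  - apply joint_monic.
    + rewrite comp_assoc, pr1_dsum, <- comp_assoc, pr1_dsum, comp_assoc, Z1, comp_zero_l, comp_zero_r.
      reflexivity.
    + rewrite comp_assoc, pr2_dsum, <- comp_assoc, pr2_dsum, comp_assoc, Z2, comp_zero_l, comp_zero_r.
      reflexivity.
  - intros W g Hg.
    assert (G1 : comp d1 (comp (bpr1 B1 B2) g) = zero W E1).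
    { rewrite comp_assoc, <- (pr1_dsum d1 d2), <- comp_assoc, Hg. apply comp_zero_r. }
    assert (G2 : comp d2 (comp (bpr2 B1 B2) g) = zero W E2).
    { rewrite comp_assoc, <- (pr2_dsum d1 d2), <- comp_assoc, Hg. apply comp_zero_r. }
    destruct (H1 W _ G1) as [h1 [E1' U1]].
    destruct (H2 W _ G2) as [h2 [E2' U2]].
    exists (pairm h1 h2). split.
    + apply joint_monic.
      * rewrite comp_assoc, pr1_dsum, <- comp_assoc, pr1_pair. exact E1'.
      * rewrite comp_assoc, pr2_dsum, <- comp_assoc, pr2_pair. exact E2'.
    + intros k Ek. apply joint_monic.
      * rewrite pr1_pair. apply U1. rewrite <- Ek, (comp_assoc (bpr1 _ _) (dsum _ _)), pr1_dsum, comp_assoc. reflexivity.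
      * rewrite pr2_pair. apply U2. rewrite <- Ek, (comp_assoc (bpr2 _ _) (dsum _ _)), pr2_dsum, comp_assoc. reflexivity.
Qed.

Lemma dsum_op_eq {C : AddCat} {X1 Y1 X2 Y2 : C} (f1 : Hom C Y1 X1) (f2 : Hom C Y2 X2) :
  @dsum (opCat C) X1 Y1 X2 Y2 f1 f2 = @dsum C Y1 X1 Y2 X2 f1 f2.
Proof. unfold dsum; simpl. rewrite <- !comp_assoc. reflexivity. Qed.

Lemma dsum_coker {C : AddCat} {A1 B1 E1 A2 B2 E2 : C} (i1 : Hom C A1 B1) (d1 : Hom C B1 E1)
  (i2 : Hom C A2 B2) (d2 : Hom C B2 E2) :
  is_cokernel d1 i1 -> is_cokernel d2 i2 -> is_cokernel (dsum d1 d2) (dsum i1 i2).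
Proof.
  intros H1 H2.
  pose proof (@dsum_ker (opCat C) E1 B1 A1 E2 B2 A2 d1 i1 d2 i2 H1 H2) as K.
  change (@is_cokernel C _ _ _ (@dsum (opCat C) E1 B1 E2 B2 d1 d2) (@dsum (opCat C) B1 A1 B2 A2 i1 i2)) in K.
  rewrite !dsum_op_eq in K. exact K.
Qed.

Lemma e2_gen {C : AddCat} (I D : @MorClass C)
  (HIker : forall X Y (f : Hom C X Y), I X Y f -> is_a_kernel f)
  (HIP : forall X Y X' (f : Hom C X Y) (h : Hom C X X'), I X Y f ->
     exists (P : C) (f' : Hom C X' P) (h' : Hom C Y P),
       is_pushout f h f' h' /\ I X' P f')
  (HDQ : forall A B E (a : Hom C A B) (b : Hom C B E),
      D A E (comp b a) -> has_kernel b -> D B E b) :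
  forall A B X (i : Hom C A B) (t : Hom C A X),
    (exists (E : C) (d : Hom C B E), kc_pair i d /\ I A B i /\ D B E d) ->
    exists (S : C) (i' : Hom C X S) (t' : Hom C B S),
      is_pushout i t i' t' /\
      exists (E : C) (d' : Hom C S E), kc_pair i' d' /\ I X S i' /\ D S E d'.
Proof.
  intros A B X i t (E & d & [[K0 KU] [Co0 CoU]] & Ii & Dd).
  destruct (HIP _ _ _ i t Ii) as (S & i' & t' & [PO POU] & Ii').
  exists S, i', t'. split. { split; assumption. }
  assert (Z : comp (zero X E) t = comp d i) by (rewrite comp_zero_l, Co0; reflexivity).
  destruct (POU E _ _ Z) as (d' & [Ed1 Ed2] & Ud).
  assert (CO : is_cokernel d' i').
  { split. exact Ed1.
    intros W g Hg.
    assert (Hg2 : comp (comp g t') i = zero A W).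
    { rewrite <- comp_assoc, <- PO, comp_assoc, Hg. apply comp_zero_l. }
    destruct (CoU W _ Hg2) as (h & Eh & Uh).
    exists h. split.
    - assert (Hw : comp g i' = comp g i' /\ comp g t' = comp g t').
      { split; reflexivity. }
      assert (Hc : comp (comp g t') i = comp (comp g i') t).
      { rewrite <- !comp_assoc, PO. reflexivity. }
      destruct (POU W _ _ (eq_sym Hc)) as (w & _ & Uw).
      rewrite (Uw g (conj eq_refl eq_refl)). apply Uw. split.
      + rewrite <- comp_assoc, Ed1, comp_zero_r, Hg. reflexivity.
      + rewrite <- comp_assoc, Ed2. exact Eh.
    - intros h' Eh'. apply Uh. rewrite <- Ed2, comp_assoc, Eh'. reflexivity. }
  exists E, d'. split; [split|split].
  - destruct (HIker _ _ _ Ii') as (Zo & e & [Ke KeU]).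
    destruct CO as [_ CU]. destruct (CU Zo e Ke) as (e' & Ee & _).
    split. exact Ed1.
    intros W g Hg. apply KeU. rewrite <- Ee, <- comp_assoc, Hg. apply comp_zero_r.
  - exact CO.
  - exact Ii'.
  - apply (HDQ _ _ _ t' d'). rewrite Ed2. exact Dd.
    exists X, i'. 
    destruct (HIker _ _ _ Ii') as (Zo & e & [Ke KeU]).
    destruct CO as [_ CU]. destruct (CU Zo e Ke) as (e' & Ee & _).
    split. exact Ed1.
    intros W g Hg. apply KeU. rewrite <- Ee, <- comp_assoc, Hg. apply comp_zero_r.
Qed.


Theorem mainTheorem5 (C : AddCat) (D I : @MorClass C)
  (HD : left_weakly_exact D) (HI : right_weakly_exact I) :
  weakly_exact (fun (A B E : C) (i : Hom C A B) (d : Hom C B E) =>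
                  kc_pair i d /\ I A B i /\ D B E d).
Proof.
  destruct HD as (Dco & Diso & Did & Dz & DP & DQ & DS).
  destruct HI as (Iker & Iiso & Iid & Iz & IP & IQ & IS).
  split; [|split; [|split; [|split; [|split; [|split; [|split]]]]]].
  - intros A B E i d [H _]; exact H.
  - intros A B E A' B' E' i d i' d' [kc [Ii Dd]] Hs.
    split; [|split].
    + exact (kc_iso i d i' d' kc Hs).
    + destruct Hs as (a & b & c & Ha & Hb & Hc & ei & ed).
      apply (Iiso _ _ _ _ i i' Ii). exists a, b. auto.
    + destruct Hs as (a & b & c & Ha & Hb & Hc & ei & ed).
      apply (Diso _ _ _ _ d d' Dd). exists b, c. auto.
  - split; [|split].
    + pose proof (K1 (@zobj C)) as K. pose proof (C1 (@zobj C)) as Co.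
      rewrite zobj_id in K, Co. split; assumption.
    + apply Iz.
    + apply Dz.
  - intros A1 B1 E1 A2 B2 E2 i1 d1 i2 d2 [[K1' C1'] [I1 D1]] [[K2 C2] [I2 D2]].
    split; [split|split].
    + apply dsum_ker; assumption.
    + apply dsum_coker; assumption.
    + apply IS; assumption.
    + apply DS; assumption.
  - intros A. exists zobj, (zero A zobj). split; [split|split].
    + apply K1.
    + apply C1.
    + apply Iid.
    + apply Dz.
  - intros A. exists zobj, (zero zobj A). split; [split|split].
    + apply C1op.
    + apply K1op.
    + apply Iz.
    + apply Did.
  - intros A B X i t Hi. exact (e2_gen I D Iker IP DQ A B X i t Hi).
  - intros A X B h t (A0 & i0 & [K Co] & Ii & Dh).
    destruct (@e2_gen (opCat C) (fun X Y f => D Y X f) (fun X Y f => I Y X f)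
                (fun X Y f H => Dco Y X f H) (fun X Y X' f h H => DP Y X X' f h H)
                (fun A B E a b H1 H2 => IQ E B A b a H1 H2) X A B h t) as (S & h' & t' & PB & (E & d' & [Kd Cd] & Dh' & Id')).
    { exists A0, i0. split; [split|split]; assumption. }
    exists S, h', t'. split. exact PB.
    exists E, d'. split; [split|split]; assumption.
Qed.
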